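(* Let $n\ge2$, $h=0$, $\epsilon\in[-1,1]$. If $n$ is even, let $C^*=C(\tfrac n2,0,0)\cup C(0,\tfrac n2,0)\cup C(n,\tfrac n2,\tfrac n2)\cup C(\tfrac n2,n,\tfrac n2)$. If $n$ is odd, let $C^*=C(\tfrac{n+1}2,0,0)\cup C(0,\tfrac{n+1}2,0)\cup C(n,\tfrac{n-1}2,\tfrac{n-1}2)\cup C(\tfrac{n-1}2,n,\tfrac{n-1}2)$ when $\epsilon\ge0$, and $C^*=C(\tfrac{n-1}2,0,0)\cup C(0,\tfrac{n-1}2,0)\cup C(n,\tfrac{n+1}2,\tfrac{n+1}2)\cup C(\tfrac{n+1}2,n,\tfrac{n+1}2)$ when $\epsilon<0$. Then for any distinct $s_1,s_2\in\mathcal X_s$, the set $C^*$ is a gate for the transition from $s_1$ to $s_2$.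
   Context: Setup. Fix an integer $n\ge2$, $\epsilon\in[-1,1]$, $h\in[0,1]$. The graph $\mathcal G(2,n)$ has vertex set $V=V^{(1)}\cup V^{(2)}$ with $V^{(1)}=\{1,\dots,n\}$, $V^{(2)}=\{n+1,\dots,2n\}$; its edge set is $E=E_{\mathrm{int}}\cup E_{\mathrm{cross}}$, where $E_{\mathrm{int}}$ consists of all pairs of distinct vertices in the same $V^{(k)}$ and $E_{\mathrm{cross}}=\{\{i,i+n\}:1\le i\le n\}$. The configuration space is $\mathcal X=\{-1,+1\}^V$ and $H(\sigma)=-\sum_{\{i,j\}\in E_{\mathrm{int}}}\sigma_i\sigma_j-\epsilon\sum_{\{i,j\}\in E_{\mathrm{cross}}}\sigma_i\sigma_j-h\sum_{i\in V}\sigma_i$. For integers $0\le p_1,p_2\le n$ and $a$, $C(p_1,p_2,a)$ is the set of configurations with exactly $p_1$ vertices of spin $+1$ in $V^{(1)}$, exactly $p_2$ vertices of spin $+1$ in $V^{(2)}$, and exactly $a$ cross-edges both of whose endpoints have spin $+1$. $\mathbf{+1},\mathbf{-1}$ are the all-plus and all-minus configurations; $\mathbf{\pm1}$ equals $+1$ on $V^{(1)}$ and $-1$ on $V^{(2)}$, $\mathbf{\mp1}$ the reverse. The stable states $\mathcal X_s$ are the global minimizers of $H$. Paths and gates. Two configurations are neighbours if they differ at exactly one vertex; a path is a finite sequence of configurations with consecutive ones neighbours. $\Phi(\eta,\eta')=\min_{\omega:\eta\to\eta'}\max_{\zeta\in\omega}H(\zeta)$. The optimal paths $(\eta\to\eta')_{opt}$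 are the paths from $\eta$ to $\eta'$ with $\max_{\xi\in\omega}H(\xi)=\Phi(\eta,\eta')$. The minimal saddles $\mathcal S(\eta,\eta')$ are the configurations $\zeta$ lying on some optimal path $\omega$ with $H(\zeta)=\max_{\xi\in\omega}H(\xi)$. A set $\mathcal W$ is a gate for the transition $\eta\to\eta'$ if $\mathcal W\subseteq\mathcal S(\eta,\eta')$ and every optimal path from $\eta$ to $\eta'$ intersects $\mathcal W$. *)

(* Defs.v *)
From HB Require Import structures.
From mathcomp Require Import all_boot all_order all_algebra.
Set Implicit Arguments. Unset Strict Implicit. Unset Printing Implicit Defensive.
Import Order.TTheory GRing.Theory Num.Theory.

(* Vertices: 'I_(n+n).  V^(1) = {lshift n i | i < n} (values 0..n-1),
   V^(2) = {rshift n i | i < n} (values n..2n-1).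
   Configurations: boolean functions, true = spin +1, false = spin -1. *)
Definition conf (n : nat) := {ffun 'I_(n + n) -> bool}.

Definition spin (R : nzRingType) (b : bool) : R := if b then 1%R else (-1)%R.

Section Model.
Variables (R : realFieldType) (n : nat) (eps h : R).
Local Open Scope ring_scope.

(* internal edges: pairs {i,j}, i<j, in the same block; cross edges: {i, i+n} *)
Definition Ham (s : conf n) : R :=
  - (\sum_(i : 'I_(n + n)) \sum_(j : 'I_(n + n) |
        ((i < j)%N && ((i < n)%N == (j < n)%N)))
        spin R (s i) * spin R (s j))
  - eps * (\sum_(i < n) spin R (s (lshift n i)) * spin R (s (rshift n i)))
  - h * (\sum_(i : 'I_(n + n)) spin R (s i)).

Definition nbr (s t : conf n) : bool := #|[set v | s v != t v]| == 1%N.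

Definition is_path (eta eta' : conf n) (p : seq (conf n)) : Prop :=
  path nbr eta p /\ last eta p = eta'.

Definition path_max (eta : conf n) (p : seq (conf n)) : R :=
  foldr (fun z m => Num.max (Ham z) m) (Ham eta) p.

Definition opt_path (eta eta' : conf n) (p : seq (conf n)) : Prop :=
  is_path eta eta' p /\
  forall q, is_path eta eta' q -> path_max eta p <= path_max eta q.

Definition min_saddle (eta eta' : conf n) (z : conf n) : Prop :=
  exists p, opt_path eta eta' p /\ z \in eta :: p /\ Ham z = path_max eta p.

Definition is_gate (eta eta' : conf n) (W : conf n -> Prop) : Prop :=
  (forall z, W z -> min_saddle eta eta' z) /\
  (forall p, opt_path eta eta' p -> exists2 z, z \in eta :: p & W z).

Definition stable (s : conf n) : Prop := forall t, Ham s <= Ham t.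
End Model.

Section Classes.
Variables (n : nat).
Definition inC (p1 p2 a : nat) (s : conf n) : Prop :=
  #|[set i : 'I_n | s (lshift n i)]| = p1 /\
  #|[set i : 'I_n | s (rshift n i)]| = p2 /\
  #|[set i : 'I_n | s (lshift n i) && s (rshift n i)]| = a.
End Classes.

Definition Cstar (R : realFieldType) (n : nat) (eps : R) (s : conf n) : Prop :=
  if ~~ odd n then
    inC (n./2) 0 0 s \/ inC 0 (n./2) 0 s \/
    inC n (n./2) (n./2) s \/ inC (n./2) n (n./2) s
  else if (0 <= eps)%R then
    (* (n+1)/2 = n.+1./2 , (n-1)/2 = n./2 *)
    inC (n.+1./2) 0 0 s \/ inC 0 (n.+1./2) 0 s \/
    inC n (n./2) (n./2) s \/ inC (n./2) n (n./2) s
  else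
    inC (n./2) 0 0 s \/ inC 0 (n./2) 0 s \/
    inC n (n.+1./2) (n.+1./2) s \/ inC (n.+1./2) n (n.+1./2) s.

(* Main.v *)
Require Import Defs.
From HB Require Import structures.
From mathcomp Require Import all_boot all_order all_algebra.
From mathcomp Require Import zify ring lra.
From Stdlib Require Import Classical.
Import Order.TTheory GRing.Theory Num.Theory.
Set Implicit Arguments. Unset Strict Implicit. Unset Printing Implicit Defensive.
Local Open Scope ring_scope.


Definition P1 n (s : conf n) := #|[set i : 'I_n | s (lshift n i)]|.
Definition P2 n (s : conf n) := #|[set i : 'I_n | s (rshift n i)]|.
Definition AA n (s : conf n) := #|[set i : 'I_n | s (lshift n i) && s (rshift n i)]|.

Definition En (R : realFieldType) (n : nat) (eps : R) (p1 p2 a : nat) : R :=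
  - ((2 * p1%:R - n%:R) ^+ 2 + (2 * p2%:R - n%:R) ^+ 2) / 2 + n%:R
  - eps * (4 * a%:R - 2 * p1%:R - 2 * p2%:R + n%:R).

Lemma spinE (R : realFieldType) (b : bool) : spin R b = 2 * (b : nat)%:R - 1.
Proof. by case: b => /=; rewrite ?mulr1 ?mulr0; lra. Qed.

Lemma spin2 (R : realFieldType) (b : bool) : spin R b * spin R b = 1.
Proof. by case: b; rewrite /= ?mulr1 ?mulrNN ?mulr1. Qed.

Lemma sum_ind (R : realFieldType) m (f : 'I_m -> bool) :
  \sum_i ((f i : nat)%:R : R) = #|[set i | f i]|%:R.
Proof.
rewrite -natr_sum; congr (_%:R).
rewrite -sum1_card [in RHS]big_mkcond /=; apply: eq_bigr => i _.
by rewrite inE; case: (f i).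
Qed.

Lemma sum_spin (R : realFieldType) m (f : 'I_m -> bool) :
  \sum_i spin R (f i) = 2 * #|[set i | f i]|%:R - m%:R.
Proof.
rewrite (eq_bigr (fun i => 2 * ((f i : nat)%:R) - 1)); last by move=> i _; rewrite spinE.
rewrite sumrB -mulr_sumr sum_ind sumr_const card_ord.
by [].
Qed.

Lemma lsh_lt n (a : 'I_n) : (lshift n a < n)%N = true.
Proof. by rewrite /= ltn_ord. Qed.
Lemma rsh_lt n (a : 'I_n) : (rshift n a < n)%N = false.
Proof. by rewrite /= ltnNge leq_addr. Qed.

Lemma internal (R : realFieldType) n (s : conf n) :
  2 * (\sum_(i : 'I_(n + n)) \sum_(j : 'I_(n + n) |
        ((i < j)%N && ((i < n)%N == (j < n)%N)))
        spin R (s i) * spin R (s j))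
  = (\sum_(a < n) spin R (s (lshift n a))) ^+ 2
    + (\sum_(a < n) spin R (s (rshift n a))) ^+ 2 - (n%:R + n%:R).
Proof.
set F := fun i j : 'I_(n+n) => spin R (s i) * spin R (s j).
set same := fun i j : 'I_(n+n) => ((i < n)%N == (j < n)%N).
have split3 : forall i j, (if same i j then F i j else 0) =
   (if (i < j)%N && same i j then F i j else 0) +
   (if (j < i)%N && same j i then F j i else 0) +
   (if j == i then F i j else 0).
  move=> i j; case: (eqVneq j i) => [->|nji].
    by rewrite ltnn /same eqxx /= !add0r.
  have : (val i != val j) by rewrite eq_sym; apply: contraNneq nji => /val_inj ->.
  rewrite /same /F; case: (ltngtP i j) => // h _.
    by rewrite /= !addr0.
  rewrite /= add0r addr0 eq_sym mulrC.
  by case: ((j < n)%N == (i < n)%N).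
have H1 : \sum_(i : 'I_(n+n)) \sum_(j : 'I_(n+n)) (if same i j then F i j else 0) =
   2 * (\sum_(i : 'I_(n+n)) \sum_(j : 'I_(n+n) | (i < j)%N && same i j) F i j) + \sum_(i : 'I_(n+n)) F i i.
  rewrite (eq_bigr (fun i : 'I_(n+n) => \sum_(j : 'I_(n+n)) ((if (i < j)%N && same i j then F i j else 0) +
   (if (j < i)%N && same j i then F j i else 0) + (if j == i then F i j else 0)))); last first.
    by move=> i _; apply: eq_bigr => j _; rewrite split3.
  rewrite (eq_bigr (fun i : 'I_(n+n) => \sum_(j : 'I_(n+n)) (if (i < j)%N && same i j then F i j else 0) +
   \sum_(j : 'I_(n+n)) (if (j < i)%N && same j i then F j i else 0) + \sum_(j : 'I_(n+n)) (if j == i then F i j else 0))); last first.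
    by move=> i _; rewrite !big_split.
  rewrite !big_split /= mulr2n mulrDl mul1r.
  congr (_ + _ + _).
  - by apply: eq_bigr => i _; rewrite [RHS]big_mkcond.
  - by rewrite exchange_big /=; apply: eq_bigr => i _; rewrite [RHS]big_mkcond.
  - by apply: eq_bigr => i _; rewrite -big_mkcond /= big_pred1_eq.
have H2 : \sum_(i : 'I_(n+n)) \sum_(j : 'I_(n+n)) (if same i j then F i j else 0) =
   (\sum_(a < n) spin R (s (lshift n a))) ^+ 2
    + (\sum_(a < n) spin R (s (rshift n a))) ^+ 2.
  rewrite big_split_ord /= !expr2; congr (_ + _).
  - rewrite mulr_suml; apply: eq_bigr => a _.
    rewrite big_split_ord /= mulr_sumr; rewrite [X in _ + X]big1 ?addr0; last first.
      by move=> c _; rewrite /same lsh_lt rsh_lt.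
    by apply: eq_bigr => c _; rewrite /same !lsh_lt.
  - rewrite mulr_suml; apply: eq_bigr => a _.
    rewrite big_split_ord /= mulr_sumr; rewrite [X in X + _]big1 ?add0r; last first.
      by move=> c _; rewrite /same lsh_lt rsh_lt.
    by apply: eq_bigr => c _; rewrite /same !rsh_lt.
have H3 : \sum_(i : 'I_(n+n)) F i i = n%:R + n%:R.
  rewrite /F (eq_bigr (fun _ => 1)); last by move=> i _; rewrite spin2.
  by rewrite sumr_const card_ord natrD.
rewrite -H2 H1 H3.
rewrite (eq_bigr (fun i : 'I_(n+n) => \sum_(j : 'I_(n+n) | (i < j)%N && same i j) F i j)) //.
by rewrite addrK.
Qed.

Lemma sum_cross (R : realFieldType) m (f g : 'I_m -> bool) :
  \sum_i spin R (f i) * spin R (g i) =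
  4 * #|[set i | f i && g i]|%:R + (-2) * #|[set i | f i]|%:R
  + (-2) * #|[set i | g i]|%:R + m%:R.
Proof.
rewrite (eq_bigr (fun i => 4 * ((f i && g i : nat)%:R) + (-2) * (f i : nat)%:R
   + (-2) * (g i : nat)%:R + 1)); last first.
  by move=> i _; case: (f i); case: (g i) => /=; lra.
rewrite !big_split /= -!mulr_sumr !sum_ind sumr_const card_ord //.
Qed.

Lemma HamE (R : realFieldType) n (eps : R) (s : conf n) :
  Ham eps 0 s = En n eps (P1 s) (P2 s) (AA s).
Proof.
rewrite /Ham /En mul0r subr0.
have hT := internal R s.
rewrite sum_cross !sum_spin in hT *.
rewrite /P1 /P2 /AA.
set T := (\sum_(i < n + n) _).
have e2 : (2:R) != 0 by rewrite pnatr_eq0.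
rewrite -(mulKf e2 T) hT.
by field.
Qed.

Definition EE (R : realFieldType) (N e K Q A : R) : R :=
  - ((2 * K - N) ^+ 2 + (2 * Q - N) ^+ 2) / 2 + N
  - e * (4 * A - 2 * K - 2 * Q + N).

Lemma edge_even (R : realFieldType) (t e : R) :
  (t = 0 \/ 2 <= t \/ t <= -2) -> -1 <= e -> e <= 1 -> - t ^+ 2 / 2 + e * t <= 0.
Proof. move=> [->|[h|h]] *; nra. Qed.

Lemma edge_odd (R : realFieldType) (t e : R) :
  (t = 1 \/ t = -1 \/ 3 <= t \/ t <= -3) -> -1 <= e -> e <= 1 ->
  - t ^+ 2 / 2 + e * t <= - 1 / 2 + `|e|.
Proof.
move=> ht h1 h2; case: (lerP 0 e) => he.
  rewrite ger0_norm //; case: ht => [->|[->|[h|h]]]; nra.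
rewrite ltr0_norm //; case: ht => [->|[->|[h|h]]]; nra.
Qed.

Lemma ec_le (R : realFieldType) (e c B : R) :
  -B <= c -> c <= B -> -1 <= e -> e <= 1 -> e * c <= B.
Proof.
move=> h1 h2 h3 h4.
have : 0 <= (1 + e) * (B - c) by apply: mulr_ge0; lra.
have : 0 <= (1 - e) * (B + c) by apply: mulr_ge0; lra.
nra.
Qed.

Lemma cross_even (R : realFieldType) (N e K Q A : R) :
  4 <= N -> 2 * K = N -> A <= K -> A <= Q -> K + Q <= N + A -> 0 <= A ->
  1 <= Q -> Q <= N - 1 -> -1 <= e -> e <= 1 ->
  EE N e K Q A <= N - N ^+ 2 / 2 -> False.
Proof.
move=> hN hK h1 h2 h3 h4 hQ1 hQ2 he1 he2; rewrite /EE.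
have hK' : K = N / 2 by rewrite -hK; field.
case: (lerP Q K) => hQK.
  have hec : e * (4 * A - 2 * K - 2 * Q + N) <= 2 * Q by apply: ec_le => //; lra.
  rewrite hK' in hec *; nra.
have hec : e * (4 * A - 2 * K - 2 * Q + N) <= 2 * N - 2 * Q by apply: ec_le => //; lra.
rewrite hK' in hec *; nra.
Qed.

Lemma cross_odd1 (R : realFieldType) (N e K Q A : R) :
  3 <= N -> 2 * K + 1 = N -> A <= K -> N + 1 <= 2 * Q -> Q <= N - 1 ->
  0 <= e -> e <= 1 ->
  EE N e K Q A <= N - (1 + N ^+ 2) / 2 + e -> False.
Proof.
move=> hN hK h1 hQ1 hQ2 he1 he2; rewrite /EE.
have hK' : 2 * K = N - 1 by lra.
have hc : 4 * A - 2 * K - 2 * Q + N + 1 <= 2 * N - 2 * Q by lra.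
have hec : e * (4 * A - 2 * K - 2 * Q + N + 1) <= 2 * N - 2 * Q.
  apply: le_trans (_ : e * (2 * N - 2 * Q) <= _).
    by apply: ler_wpM2l.
  have : 0 <= (1 - e) * (2 * N - 2 * Q) by apply: mulr_ge0; lra.
  nra.
rewrite hK' in hec *; move=> h; nra.
Qed.

Lemma cross_odd2 (R : realFieldType) (N e K Q A : R) :
  3 <= N -> 2 * K = N + 1 -> A <= Q -> 2 * Q + 1 <= N -> 1 <= Q ->
  0 <= e -> e <= 1 ->
  EE N e K Q A <= N - (1 + N ^+ 2) / 2 + e -> False.
Proof.
move=> hN hK h1 hQ1 hQ2 he1 he2; rewrite /EE.
have hc : 4 * A - 2 * K - 2 * Q + N + 1 <= 2 * Q by lra.
have hec : e * (4 * A - 2 * K - 2 * Q + N + 1) <= 2 * Q.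
  apply: le_trans (_ : e * (2 * Q) <= _).
    by apply: ler_wpM2l.
  have : 0 <= (1 - e) * (2 * Q) by apply: mulr_ge0; lra.
  nra.
rewrite hK in hec *; move=> h; nra.
Qed.

Lemma cross_odd3 (R : realFieldType) (N e K Q A : R) :
  3 <= N -> 2 * K = N + 1 -> K + Q <= N + A -> N + 1 <= 2 * Q -> Q <= N - 1 ->
  -1 <= e -> e <= 0 ->
  EE N e K Q A <= N - (1 + N ^+ 2) / 2 - e -> False.
Proof.
move=> hN hK h1 hQ1 hQ2 he1 he2; rewrite /EE.
have hc : 1 - (4 * A - 2 * K - 2 * Q + N) <= 2 * N - 2 * Q by lra.
have hec : (- e) * (1 - (4 * A - 2 * K - 2 * Q + N)) <= 2 * N - 2 * Q.
  apply: le_trans (_ : (- e) * (2 * N - 2 * Q) <= _).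
    by apply: ler_wpM2l => //; lra.
  have : 0 <= (1 + e) * (2 * N - 2 * Q) by apply: mulr_ge0; lra.
  nra.
rewrite hK in hec *; move=> h; nra.
Qed.

Lemma cross_odd4 (R : realFieldType) (N e K Q A : R) :
  3 <= N -> 2 * K + 1 = N -> 0 <= A -> 2 * Q + 1 <= N -> 1 <= Q ->
  -1 <= e -> e <= 0 ->
  EE N e K Q A <= N - (1 + N ^+ 2) / 2 - e -> False.
Proof.
move=> hN hK h1 hQ1 hQ2 he1 he2; rewrite /EE.
have hK' : 2 * K = N - 1 by lra.
have hc : 1 - (4 * A - 2 * K - 2 * Q + N) <= 2 * Q by lra.
have hec : (- e) * (1 - (4 * A - 2 * K - 2 * Q + N)) <= 2 * Q.
  apply: le_trans (_ : (- e) * (2 * Q) <= _).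
    by apply: ler_wpM2l => //; lra.
  have : 0 <= (1 + e) * (2 * Q) by apply: mulr_ge0; lra.
  nra.
rewrite hK' in hec *; move=> h; nra.
Qed.

Definition Phi (R : realFieldType) (n : nat) (eps : R) : R :=
  if ~~ odd n then n%:R - n%:R ^+ 2 / 2 else n%:R - (1 + n%:R ^+ 2) / 2 + `|eps|.

Definition valid (n p1 p2 a : nat) : bool :=
  [&& (a <= p1)%N, (a <= p2)%N, (p1 <= n)%N, (p2 <= n)%N & (p1 + p2 <= n + a)%N].

Definition inT (p1 p2 a k l m : nat) : Prop := p1 = k /\ p2 = l /\ a = m.

Definition CS (R : realFieldType) (n : nat) (eps : R) (p1 p2 a : nat) : Prop :=
  if ~~ odd n then
    inT p1 p2 a (n./2) 0 0 \/ inT p1 p2 a 0 (n./2) 0 \/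
    inT p1 p2 a n (n./2) (n./2) \/ inT p1 p2 a (n./2) n (n./2)
  else if (0 <= eps)%R then
    inT p1 p2 a (n.+1./2) 0 0 \/ inT p1 p2 a 0 (n.+1./2) 0 \/
    inT p1 p2 a n (n./2) (n./2) \/ inT p1 p2 a (n./2) n (n./2)
  else
    inT p1 p2 a (n./2) 0 0 \/ inT p1 p2 a 0 (n./2) 0 \/
    inT p1 p2 a n (n.+1./2) (n.+1./2) \/ inT p1 p2 a (n.+1./2) n (n.+1./2).

Lemma En_EE (R : realFieldType) n (eps : R) p1 p2 a :
  En n eps p1 p2 a = EE n%:R eps p1%:R p2%:R a%:R.
Proof. by []. Qed.

Lemma nat_le (R : realFieldType) (a b : nat) : (a <= b)%N -> (a%:R <= b%:R :> R).
Proof. by rewrite ler_nat. Qed.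
Lemma nat_eq (R : realFieldType) (a b : nat) : a = b -> (a%:R = b%:R :> R).
Proof. by move=> ->. Qed.

Lemma cross_nat (R : realFieldType) n (eps : R) k q a a' :
  (2 <= n)%N -> -1 <= eps -> eps <= 1 ->
  valid n k q a -> valid n k.+1 q a' ->
  En n eps k q a <= Phi n eps -> En n eps k.+1 q a' <= Phi n eps ->
  (k + k <= n)%N -> (n < k + k + 2)%N ->
  CS n eps k q a \/ CS n eps k.+1 q a'.
Proof.
move=> hn he1 he2 /and5P[v1 v2 v3 v4 v5] /and5P[w1 w2 w3 w4 w5] hE hE' hk1 hk2.
rewrite /CS /Phi /inT in hE hE' *.
case: ifP => hodd.
  rewrite hodd in hE hE'.
  have hk : n = (k + k)%N by lia.
  have hh : n./2 = k by lia.
  rewrite hh.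
  case: (ltnP n 4) => hn4.
    have hn2 : n = 2%N by lia.
    have hk1' : k = 1%N by lia.
    have : (q = 0 \/ q = 1 \/ q = 2)%N by lia.
    case=> [hq|[hq|hq]].
    - left; left; lia.
    - right; right; right; left; lia.
    - left; right; right; right; lia.
  have : (q = 0 \/ q = n \/ (1 <= q /\ q <= n - 1))%N by lia.
  case=> [hq|[hq|[hq1 hq2]]].
  - left; left; lia.
  - left; right; right; right; lia.
  exfalso; apply: (@cross_even R n%:R eps k%:R q%:R a%:R) => //.
  - by have := nat_le R hn4.
  - by have := nat_eq R hk; rewrite natrD => ->; ring.
  - exact: nat_le.
  - exact: nat_le.
  - by have := nat_le R v5; rewrite !natrD.
  - by have := nat_le R hq1.
  - have := nat_le R (ltac:(lia) : (q + 1 <= n)%N); rewrite natrD ?mulr1n.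
    by move=> h; lra.
have hk : n = (k + k + 1)%N by lia.
have hh : n./2 = k by lia.
have hh' : n.+1./2 = k.+1 by lia.
rewrite hh hh'.
have hN3 : (3 : R) <= n%:R by exact: (nat_le R (ltac:(lia) : (3 <= n)%N)).
have hNK : 2 * k%:R + 1 = n%:R :> R by have := nat_eq R hk; rewrite !natrD => ->; ring.
case: ifP => he; rewrite hodd in hE hE'.
  rewrite ger0_norm // in hE hE'.
  case: (ltnP n (q + q)) => hq.
    have : (q = n \/ q <= n - 1)%N by lia.
    case=> [hqn|hqn].
      left; right; right; right; lia.
    exfalso; apply: (@cross_odd1 R n%:R eps k%:R q%:R a%:R) => //.
    - exact: nat_le.
    - by have := nat_le R (ltac:(lia) : (n + 1 <= q + q)%N); rewrite !natrD ?mulr1n => h; lra.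
    - have := nat_le R (ltac:(lia) : (q + 1 <= n)%N); rewrite natrD ?mulr1n.
      by move=> h; lra.
  have : (q = 0 \/ 1 <= q)%N by lia.
  case=> [hq0|hq1].
    right; left; lia.
  exfalso; apply: (@cross_odd2 R n%:R eps k.+1%:R q%:R a'%:R) => //.
  - by rewrite -addn1 natrD; lra.
  - exact: nat_le.
  - have := nat_le R (ltac:(lia) : (q + q + 1 <= n)%N); rewrite !natrD ?mulr1n.
    by move=> h; lra.
  - by have := nat_le R hq1.
have he' : eps < 0 by rewrite ltNge he.
rewrite ltr0_norm // in hE hE'.
case: (ltnP n (q + q)) => hq.
  have : (q = n \/ q <= n - 1)%N by lia.
  case=> [hqn|hqn].
    right; right; right; right; lia.
  exfalso; apply: (@cross_odd3 R n%:R eps k.+1%:R q%:R a'%:R) => //.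
  - by rewrite -addn1 natrD; lra.
  - by have := nat_le R w5; rewrite !natrD.
  - by have := nat_le R (ltac:(lia) : (n + 1 <= q + q)%N); rewrite !natrD ?mulr1n => h; lra.
  - have := nat_le R (ltac:(lia) : (q + 1 <= n)%N); rewrite natrD ?mulr1n.
    by move=> h; lra.
  - exact: ltW.
have : (q = 0 \/ 1 <= q)%N by lia.
case=> [hq0|hq1].
  left; left; lia.
exfalso; apply: (@cross_odd4 R n%:R eps k%:R q%:R a%:R) => //.
- have := nat_le R (ltac:(lia) : (q + q + 1 <= n)%N); rewrite !natrD ?mulr1n.
  by move=> h; lra.
- by have := nat_le R hq1.
- exact: ltW.
Qed.

Lemma En_sym (R : realFieldType) n (eps : R) p1 p2 a :
  En n eps p1 p2 a = En n eps p2 p1 a.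
Proof. rewrite /En; ring. Qed.

Lemma valid_sym n p1 p2 a : valid n p1 p2 a = valid n p2 p1 a.
Proof.
rewrite /valid; apply/and5P/and5P => [] [*]; split => //; lia.
Qed.

Lemma CS_sym (R : realFieldType) n (eps : R) p1 p2 a :
  CS n eps p1 p2 a <-> CS n eps p2 p1 a.
Proof.
rewrite /CS /inT; case: ifP => _; [|case: ifP => _]; split; intuition.
Qed.

Lemma cross_nat2 (R : realFieldType) n (eps : R) k q a a' :
  (2 <= n)%N -> -1 <= eps -> eps <= 1 ->
  valid n q k a -> valid n q k.+1 a' ->
  En n eps q k a <= Phi n eps -> En n eps q k.+1 a' <= Phi n eps ->
  (k + k <= n)%N -> (n < k + k + 2)%N ->
  CS n eps q k a \/ CS n eps q k.+1 a'.
Proof.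
rewrite valid_sym (valid_sym n q) En_sym (En_sym _ _ q) !(CS_sym _ _ q) => *.
exact: cross_nat.
Qed.

Lemma edge_core (R : realFieldType) n k (e : R) :
  (2 <= n)%N -> (k <= n)%N -> -1 <= e -> e <= 1 ->
  - ((2 * k%:R - n%:R) ^+ 2 + n%:R ^+ 2) / 2 + n%:R + e * (2 * k%:R - n%:R)
  <= Phi n e.
Proof.
move=> hn hk he1 he2; rewrite /Phi.
case: ifP => hodd.
  have ht : (2 * (k%:R : R) - n%:R = 0 \/ 2 <= 2 * (k%:R : R) - n%:R \/ 2 * (k%:R : R) - n%:R <= -2 :> R).
    have : (k + k = n \/ n + 2 <= k + k \/ k + k + 2 <= n)%N by lia.
    case=> [h|[h|h]].
    - by left; have := nat_eq R h; rewrite natrD => <-; ring.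
    - by right; left; have := nat_le R h; rewrite !natrD => h'; lra.
    - by right; right; have := nat_le R h; rewrite !natrD => h'; lra.
  have := edge_even ht he1 he2; move=> h; lra.
have ht : (2 * (k%:R : R) - n%:R = 1 \/ 2 * (k%:R : R) - n%:R = -1 \/ 3 <= 2 * (k%:R : R) - n%:R
    \/ 2 * (k%:R : R) - n%:R <= -3 :> R).
  have : (k + k = n + 1 \/ k + k + 1 = n \/ n + 3 <= k + k \/ k + k + 3 <= n)%N by lia.
  case=> [h|[h|[h|h]]].
  - by left; have := nat_eq R h; rewrite !natrD ?mulr1n => h'; lra.
  - by right; left; have := nat_eq R h; rewrite !natrD ?mulr1n => h'; lra.
  - by right; right; left; have := nat_le R h; rewrite !natrD => h'; lra.
  - by right; right; right; have := nat_le R h; rewrite !natrD => h'; lra.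
have := edge_odd ht he1 he2; move=> h; lra.
Qed.

Lemma edge_nat (R : realFieldType) n (eps : R) k :
  (2 <= n)%N -> (k <= n)%N -> -1 <= eps -> eps <= 1 ->
  [/\ En n eps k 0 0 <= Phi n eps, En n eps 0 k 0 <= Phi n eps,
      En n eps n k k <= Phi n eps & En n eps k n k <= Phi n eps].
Proof.
move=> hn hk he1 he2.
have h1 := edge_core hn hk he1 he2.
have h2 : - ((2 * k%:R - n%:R) ^+ 2 + n%:R ^+ 2) / 2 + n%:R + (- eps) * (2 * k%:R - n%:R)
  <= Phi n eps.
  have -> : Phi n eps = Phi n (- eps) by rewrite /Phi normrN.
  by apply: edge_core => //; lra.
have e1 : En n eps k 0 0 = - ((2 * k%:R - n%:R) ^+ 2 + n%:R ^+ 2) / 2 + n%:R + eps * (2 * k%:R - n%:R).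
  rewrite /En; ring.
have e3 : En n eps n k k = - ((2 * k%:R - n%:R) ^+ 2 + n%:R ^+ 2) / 2 + n%:R + (- eps) * (2 * k%:R - n%:R).
  rewrite /En; ring.
split.
- by rewrite e1.
- by rewrite En_sym e1.
- by rewrite e3.
- by rewrite En_sym e3.
Qed.

Lemma CS_val (R : realFieldType) n (eps : R) p1 p2 a :
  (2 <= n)%N -> CS n eps p1 p2 a -> En n eps p1 p2 a = Phi n eps.
Proof.
move=> hn; rewrite /CS /Phi /inT.
case: ifP => hodd.
  have hh : (n./2 + n./2 = n)%N by lia.
  have hN : n./2%:R + n./2%:R = n%:R :> R by rewrite -natrD hh.
  by case=> [[->[->->]]|[[->[->->]]|[[->[->->]]|[->[->->]]]]]; rewrite /En; rewrite -hN; ring.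
have hh : (n./2 + n./2 + 1 = n)%N by lia.
have hh' : (n.+1./2 = n./2 + 1)%N by lia.
have hN : n./2%:R + n./2%:R + 1 = n%:R :> R by have := nat_eq R hh; rewrite !natrD ?mulr1n.
rewrite hh'.
case: ifP => he.
  rewrite ger0_norm //.
  by case=> [[->[->->]]|[[->[->->]]|[[->[->->]]|[->[->->]]]]]; rewrite /En -hN ?natrD; ring.
rewrite ltr0_norm; last by rewrite ltNge he.
by case=> [[->[->->]]|[[->[->->]]|[[->[->->]]|[->[->->]]]]]; rewrite /En -hN ?natrD; ring.
Qed.

Lemma vsplit n (v : 'I_(n + n)) :
  (exists i, v = lshift n i) \/ (exists i, v = rshift n i).
Proof. by rewrite -(splitK v); case: (split v) => i; [left|right]; exists i. Qed.

Lemma lr_neq n (i j : 'I_n) : (rshift n j == lshift n i) = false.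
Proof. by rewrite eq_sym eq_lrshift. Qed.

Lemma valid_conf n (s : conf n) : valid n (P1 s) (P2 s) (AA s).
Proof.
have eI : [set i : 'I_n | s (lshift n i) && s (rshift n i)] =
          [set i | s (lshift n i)] :&: [set i | s (rshift n i)].
  by apply/setP => i; rewrite !inE.
have c1 : forall A : {set 'I_n}, (#|A| <= n)%N.
  by move=> A; rewrite -[X in (_ <= X)%N]card_ord max_card.
apply/and5P; split; rewrite /AA /P1 /P2 ?c1 //.
- by apply: subset_leq_card; apply/subsetP => i; rewrite !inE => /andP[].
- by apply: subset_leq_card; apply/subsetP => i; rewrite !inE => /andP[].
- rewrite -cardsUI eI leq_add2r; exact: c1.
Qed.

Definition blk1 n (s : conf n) (b : bool) := forall i, s (lshift n i) = b.
Definition blk2 n (s : conf n) (b : bool) := forall i, s (rshift n i) = b.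

Lemma blk1_cnt n (s : conf n) b : blk1 s b ->
  if b then P1 s = n /\ AA s = P2 s else P1 s = 0%N /\ AA s = 0%N.
Proof.
move=> h; case: b h => h.
  split.
    rewrite /P1; have -> : [set i | s (lshift n i)] = setT by apply/setP => i; rewrite !inE h.
    by rewrite cardsT card_ord.
  rewrite /AA /P2.
  by have -> : [set i | s (lshift n i) && s (rshift n i)] = [set i | s (rshift n i)]
    by apply/setP => i; rewrite !inE h.
split.
  by rewrite /P1; apply/eqP; rewrite cards_eq0; apply/eqP/setP => i; rewrite !inE h.
by rewrite /AA; apply/eqP; rewrite cards_eq0; apply/eqP/setP => i; rewrite !inE h.
Qed.

Lemma blk2_cnt n (s : conf n) b : blk2 s b ->
  if b then P2 s = n /\ AA s = P1 s else P2 s = 0%N /\ AA s = 0%N.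
Proof.
move=> h; case: b h => h.
  split.
    rewrite /P2; have -> : [set i | s (rshift n i)] = setT by apply/setP => i; rewrite !inE h.
    by rewrite cardsT card_ord.
  rewrite /AA /P1.
  by have -> : [set i | s (lshift n i) && s (rshift n i)] = [set i | s (lshift n i)]
    by apply/setP => i; rewrite !inE h andbT.
split.
  by rewrite /P2; apply/eqP; rewrite cards_eq0; apply/eqP/setP => i; rewrite !inE h.
by rewrite /AA; apply/eqP; rewrite cards_eq0; apply/eqP/setP => i; rewrite !inE h andbF.
Qed.

Lemma card_blk n (f : 'I_n -> bool) :
  (#|[set i | f i]| = 0%N -> forall i, f i = false) /\
  (#|[set i | f i]| = n -> forall i, f i = true).
Proof.
split.
  move/eqP; rewrite cards_eq0 => /eqP h i.
  apply/negbTE; have : i \notin [set i | f i] by rewrite h inE.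
  by rewrite inE.
move=> h i.
have : [set i | f i] == setT by rewrite eqEcard subsetT cardsT card_ord h leqnn.
by move/eqP/setP/(_ i); rewrite !inE.
Qed.

Lemma P1_blk n (s : conf n) :
  (P1 s = 0%N -> blk1 s false) /\ (P1 s = n -> blk1 s true).
Proof. exact: (card_blk (fun i => s (lshift n i))). Qed.
Lemma P2_blk n (s : conf n) :
  (P2 s = 0%N -> blk2 s false) /\ (P2 s = n -> blk2 s true).
Proof. exact: (card_blk (fun i => s (rshift n i))). Qed.

Lemma nbrP n (s t : conf n) : nbr s t ->
  exists v, s v != t v /\ forall w, w != v -> s w = t w.
Proof.
move=> /cards1P [v hv]; exists v; split.
  have : v \in [set v] by rewrite inE.
  by rewrite -hv inE.
move=> w hw; apply/eqP; apply: contraNT hw => hw.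
have : w \in [set v | s v != t v] by rewrite inE.
by rewrite hv inE.
Qed.

Lemma step_card n (f g : 'I_n -> bool) i :
  f i != g i -> (forall j, j != i -> f j = g j) ->
  #|[set j | f j]| = #|[set j | g j]|.+1 \/ #|[set j | g j]| = #|[set j | f j]|.+1.
Proof.
move=> hi hj.
case hf: (f i) hi => /= hi.
  have hg : g i = false by move: hi; case: (g i).
  left; rewrite (cardsD1 i) inE hf; congr (_.+1); apply: eq_card => j; rewrite !inE; case: (eqVneq j i) => [->|hji] /=; first by rewrite hg.
  by rewrite hj.
have hg : g i = true by move: hi; case: (g i).
right; rewrite (cardsD1 i [set j | g j]) inE hg; congr (_.+1); apply: eq_card => j; rewrite !inE; case: (eqVneq j i) => [->|hji] /=; first by rewrite hf.
by rewrite hj.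
Qed.

Lemma step_l n (s t : conf n) i :
  s (lshift n i) != t (lshift n i) ->
  (forall w, w != lshift n i -> s w = t w) ->
  P2 s = P2 t /\ (P1 s = (P1 t).+1 \/ P1 t = (P1 s).+1).
Proof.
move=> hi hw; split.
  by rewrite /P2; apply: eq_card => j; rewrite !inE hw // lr_neq.
apply: (step_card (f := fun j => s (lshift n j)) (g := fun j => t (lshift n j)) hi).
move=> j hj; apply: hw; apply: contra hj => /eqP h; apply/eqP; exact: lshift_inj h.
Qed.

Lemma step_r n (s t : conf n) i :
  s (rshift n i) != t (rshift n i) ->
  (forall w, w != rshift n i -> s w = t w) ->
  P1 s = P1 t /\ (P2 s = (P2 t).+1 \/ P2 t = (P2 s).+1).
Proof.
move=> hi hw; split.
  by rewrite /P1; apply: eq_card => j; rewrite !inE hw // eq_lrshift.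
apply: (step_card (f := fun j => s (rshift n j)) (g := fun j => t (rshift n j)) hi).
move=> j hj; apply: hw; apply: contra hj => /eqP h; apply/eqP; exact: rshift_inj h.
Qed.

Lemma pm_le (R : realFieldType) n (eps h L : R) (eta : conf n) p :
  (path_max eps h eta p <= L) <-> (forall z, z \in eta :: p -> Ham eps h z <= L).
Proof.
elim: p => [|z p IH] /=.
  split; first by move=> hl z; rewrite inE => /eqP ->.
  by move=> H; apply: H; rewrite inE.
rewrite ge_max; split.
  case/andP => hz /IH hp w; rewrite inE => /orP[/eqP->|].
    by apply: hp; rewrite inE eqxx.
  rewrite inE => /orP[/eqP->//|hw].
  by apply: hp; rewrite inE hw orbT.
move=> H; apply/andP; split.
  by apply: H; rewrite !inE eqxx orbT.
apply/IH => w; rewrite inE => /orP[/eqP->|hw]; apply: H; rewrite !inE ?eqxx //.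
by rewrite hw !orbT.
Qed.

Lemma pm_mem (R : realFieldType) n (eps h : R) (eta : conf n) p z :
  z \in eta :: p -> Ham eps h z <= path_max eps h eta p.
Proof. by move=> hz; move: z hz; apply/pm_le. Qed.

Definition conn (R : realFieldType) n (eps L : R) (x y : conf n) : Prop :=
  exists p, path (@nbr n) x p /\ last x p = y /\
            forall z, z \in x :: p -> Ham eps 0 z <= L.

Lemma conn_trans (R : realFieldType) n (eps L : R) (x y z : conf n) :
  conn eps L x y -> conn eps L y z -> conn eps L x z.
Proof.
move=> [p [hp [hl hm]]] [q [hq [hl' hm']]].
exists (p ++ q); split; first by rewrite cat_path hp hl hq.
split; first by rewrite last_cat hl.
move=> w; rewrite -cat_cons mem_cat => /orP[hw|hw]; first exact: hm.
by apply: hm'; rewrite inE hw orbT.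
Qed.

Definition between n (x y z : conf n) := forall v, x v = y v -> z v = x v.

Lemma box (R : realFieldType) n (eps L : R) (x y : conf n) :
  (forall z, between x y z -> Ham eps 0 z <= L) -> conn eps L x y.
Proof.
move: {2}#|[set v | x v != y v]| (erefl #|[set v | x v != y v]|) => d.
elim: d x => [|d IH] x hd hb.
  have exy : x = y.
    apply/ffunP => v; apply/eqP; apply: contraT => hv.
    have : v \in [set v | x v != y v] by rewrite inE.
    by rewrite (cards0_eq hd) inE.
  exists [::]; split => //; split => //.
  by move=> z; rewrite inE => /eqP ->; apply: hb.
have : [set v | x v != y v] != set0 by rewrite -cards_eq0 hd.
case/set0Pn => v; rewrite inE => hv.
pose x' := [ffun w => if w == v then y v else x w].
have hx'v : x' v = y v by rewrite ffunE eqxx.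
have hx'w : forall w, w != v -> x' w = x w by move=> w hw; rewrite ffunE (negbTE hw).
have hn : nbr x x'.
  rewrite /nbr (_ : [set w | x w != x' w] = [set v]) ?cards1 //.
  apply/setP => w; rewrite !inE; case: (eqVneq w v) => [->|hw]; first by rewrite hx'v hv.
  by rewrite hx'w // eqxx.
have hd' : #|[set w | x' w != y w]| = d.
  have -> : [set w | x' w != y w] = [set w | x w != y w] :\ v.
    apply/setP => w; rewrite !inE; case: (eqVneq w v) => [->|hw] /=.
      by rewrite hx'v eqxx.
    by rewrite hx'w.
  by move: hd; rewrite (cardsD1 v) inE hv => [[]].
have hb' : forall z, between x' y z -> Ham eps 0 z <= L.
  move=> z hz; apply: hb => w hw.
  have hwv : w != v by apply: contraNneq hv => <-; rewrite hw.
  by rewrite -(hx'w w hwv); apply: hz; rewrite hx'w.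
have [p [hp [hl hm]]] := IH x' hd' hb'.
exists (x' :: p); split; first by rewrite /= hn hp.
split => //.
move=> z; rewrite inE => /orP[/eqP ->|hz]; last exact: hm.
by apply: hb.
Qed.

Lemma between_sym n (x y z : conf n) : between x y z -> between y x z.
Proof. by move=> h v hv; rewrite h // hv. Qed.

Definition onEdge n (s : conf n) := exists b, blk1 s b \/ blk2 s b.

Lemma edge_low (R : realFieldType) n (eps : R) (z : conf n) :
  (2 <= n)%N -> -1 <= eps -> eps <= 1 -> onEdge z -> Ham eps 0 z <= Phi n eps.
Proof.
move=> hn he1 he2 [b [h|h]]; rewrite HamE;
  have /and5P[_ _ v3 v4 _] := valid_conf z.
  have := blk1_cnt h; case: b h => h [-> ->].
    by case: (edge_nat hn v4 he1 he2).
  by case: (edge_nat hn v4 he1 he2).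
have := blk2_cnt h; case: b h => h [-> ->].
  by case: (edge_nat hn v3 he1 he2).
by case: (edge_nat hn v3 he1 he2).
Qed.

Lemma blk_conn (R : realFieldType) n (eps : R) (u w : conf n) b :
  (2 <= n)%N -> -1 <= eps -> eps <= 1 ->
  (blk1 u b /\ blk1 w b) \/ (blk2 u b /\ blk2 w b) -> conn eps (Phi n eps) u w.
Proof.
move=> hn he1 he2 H; apply: box => z hz; apply: edge_low => //.
exists b; case: H => [[hu hw]|[hu hw]]; [left|right] => i; rewrite hz hu //;
  by rewrite hu hw.
Qed.

Definition cfg n (b1 b2 : bool) : conf n := [ffun v : 'I_(n + n) => if (v < n)%N then b1 else b2].

Lemma cfg1 n b1 b2 : blk1 (cfg n b1 b2) b1.
Proof. by move=> i; rewrite ffunE lsh_lt. Qed.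
Lemma cfg2 n b1 b2 : blk2 (cfg n b1 b2) b2.
Proof. by move=> i; rewrite ffunE rsh_lt. Qed.

Lemma edge_c0 (R : realFieldType) n (eps : R) (u : conf n) :
  (2 <= n)%N -> -1 <= eps -> eps <= 1 -> onEdge u ->
  conn eps (Phi n eps) u (cfg n false false) /\ conn eps (Phi n eps) (cfg n false false) u.
Proof.
move=> hn he1 he2 [b [h|h]]; case: b h => h.
- split.
    apply: (conn_trans (y := cfg n true false)).
      by apply: (blk_conn (b := true)) => //; left; split => //; apply: cfg1.
    by apply: (blk_conn (b := false)) => //; right; split; apply: cfg2.
  apply: (conn_trans (y := cfg n true false)).
    by apply: (blk_conn (b := false)) => //; right; split; apply: cfg2.
  by apply: (blk_conn (b := true)) => //; left; split => //; apply: cfg1.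
- split.
    by apply: (blk_conn (b := false)) => //; left; split => //; apply: cfg1.
  by apply: (blk_conn (b := false)) => //; left; split => //; apply: cfg1.
- split.
    apply: (conn_trans (y := cfg n false true)).
      by apply: (blk_conn (b := true)) => //; right; split => //; apply: cfg2.
    by apply: (blk_conn (b := false)) => //; left; split; apply: cfg1.
  apply: (conn_trans (y := cfg n false true)).
    by apply: (blk_conn (b := false)) => //; left; split; apply: cfg1.
  by apply: (blk_conn (b := true)) => //; right; split => //; apply: cfg2.
- split.
    by apply: (blk_conn (b := false)) => //; right; split => //; apply: cfg2.
  by apply: (blk_conn (b := false)) => //; right; split => //; apply: cfg2.
Qed.

Lemma edge_conn (R : realFieldType) n (eps : R) (u w : conf n) :
  (2 <= n)%N -> -1 <= eps -> eps <= 1 -> onEdge u -> onEdge w ->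
  conn eps (Phi n eps) u w.
Proof.
move=> hn he1 he2 hu hw.
apply: (conn_trans (y := cfg n false false)).
  by case: (edge_c0 hn he1 he2 hu).
by case: (edge_c0 hn he1 he2 hw).
Qed.

Lemma stab_real (R : realFieldType) (N e K Q A : R) :
  0 <= A -> A <= K -> A <= Q -> K + Q <= N + A -> K <= N -> Q <= N ->
  -1 <= e -> e <= 1 ->
  EE N e K Q A <= - N ^+ 2 + N - `|e| * N -> K * (K - N) = 0 /\ Q * (Q - N) = 0.
Proof.
move=> h1 h2 h3 h4 h5 h6 he1 he2; rewrite /EE => hE.
have hc : e * (4 * A - 2 * K - 2 * Q + N) <= `|e| * N.
  case: (lerP 0 e) => he.
    rewrite ger0_norm //; apply: ler_wpM2l => //; lra.
  rewrite ltr0_norm //; have : 0 <= (- e) * (4 * A - 2 * K - 2 * Q + N + N).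
    by apply: mulr_ge0; lra.
  nra.
have hK : K * (K - N) <= 0 by apply: mulr_ge0_le0; lra.
have hQ : Q * (Q - N) <= 0 by apply: mulr_ge0_le0; lra.
have hs : 0 <= K * (K - N) + Q * (Q - N) by nra.
split; apply/eqP; rewrite eq_le; apply/andP; split; lra.
Qed.

Lemma nat0n (R : realFieldType) (k n : nat) :
  (k%:R : R) * (k%:R - n%:R) = 0 -> k = 0%N \/ k = n.
Proof.
move/eqP; rewrite mulf_eq0 => /orP[|]; first by rewrite pnatr_eq0 => /eqP; left.
by rewrite subr_eq0 eqr_nat => /eqP; right.
Qed.

Lemma stable_corner (R : realFieldType) n (eps : R) (s : conf n) :
  (2 <= n)%N -> -1 <= eps -> eps <= 1 -> stable eps 0 s ->
  (P1 s = 0%N \/ P1 s = n) /\ (P2 s = 0%N \/ P2 s = n).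
Proof.
move=> hn he1 he2 hs.
have hb : Ham eps 0 s <= - n%:R ^+ 2 + n%:R - `|eps| * n%:R.
  case: (lerP 0 eps) => he.
    apply: le_trans (hs (cfg n true true)) _.
    have := blk1_cnt (@cfg1 n true true); have := blk2_cnt (@cfg2 n true true).
    move=> [h2 _] [h1 h3]; rewrite HamE h1 h2 h3 h2 /En ger0_norm //.
    nra.
  apply: le_trans (hs (cfg n true false)) _.
  have := blk1_cnt (@cfg1 n true false); have := blk2_cnt (@cfg2 n true false).
  move=> [h2 _] [h1 h3]; rewrite HamE h1 h2 h3 h2 /En ltr0_norm //.
  nra.
rewrite HamE En_EE in hb.
have /and5P[v1 v2 v3 v4 v5] := valid_conf s.
have v5' : (P1 s)%:R + (P2 s)%:R <= n%:R + (AA s)%:R :> R.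
  by have := nat_le R v5; rewrite !natrD.
have [h1 h2] := stab_real (ler0n _ _) (nat_le R v1) (nat_le R v2)
  v5' (nat_le R v3) (nat_le R v4) he1 he2 hb.
by split; [exact: nat0n h1 | exact: nat0n h2].
Qed.

Lemma bc (n k : nat) : (n < k.+1 + k.+1)%N != (n < k + k)%N ->
  (k + k <= n)%N /\ (n < k + k + 2)%N.
Proof. case: (ltnP n (k+k)) => h; case: (ltnP n (k.+1+k.+1)) => h' //=; lia. Qed.

Definition ph n (s : conf n) := ((n < P1 s + P1 s)%N, (n < P2 s + P2 s)%N).
Definition CSc (R : realFieldType) n (eps : R) (s : conf n) := CS n eps (P1 s) (P2 s) (AA s).

Lemma ph_step (R : realFieldType) n (eps : R) (A B : conf n) :
  (2 <= n)%N -> -1 <= eps -> eps <= 1 -> nbr A B ->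
  Ham eps 0 A <= Phi n eps -> Ham eps 0 B <= Phi n eps ->
  ~ CSc eps A -> ~ CSc eps B -> ph A = ph B.
Proof.
move=> hn he1 he2 hAB hA hB cA cB.
rewrite HamE in hA; rewrite HamE in hB.
have vA := valid_conf A; have vB := valid_conf B.
have [v [hv hw]] := nbrP hAB.
case: (vsplit v) => [[i ev]|[i ev]]; rewrite ev in hv hw.
  have [e2 e1] := step_l hv hw.
  rewrite /ph e2; congr pair.
  case: (boolP ((n < P1 A + P1 A)%N == (n < P1 B + P1 B)%N)) => [/eqP//|hne]; exfalso.
  case: e1 => e1.
    rewrite e1 in hne vA hA; rewrite e2 in vA hA.
    have [hk1 hk2] := bc hne.
    case: (cross_nat hn he1 he2 vB vA hB hA hk1 hk2) => h.
      by apply: cB.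
    by apply: cA; rewrite /CSc e1 e2.
  rewrite e1 in hne vB hB; rewrite -e2 in vB hB.
  rewrite eq_sym in hne.
  have [hk1 hk2] := bc hne.
  case: (cross_nat hn he1 he2 vA vB hA hB hk1 hk2) => h.
    by apply: cA.
  by apply: cB; rewrite /CSc e1 -e2.
have [e2 e1] := step_r hv hw.
rewrite /ph e2; congr pair.
case: (boolP ((n < P2 A + P2 A)%N == (n < P2 B + P2 B)%N)) => [/eqP//|hne]; exfalso.
case: e1 => e1.
  rewrite e1 in hne vA hA; rewrite e2 in vA hA.
  have [hk1 hk2] := bc hne.
  case: (cross_nat2 hn he1 he2 vB vA hB hA hk1 hk2) => h.
    by apply: cB.
  by apply: cA; rewrite /CSc e1 e2.
rewrite e1 in hne vB hB; rewrite -e2 in vB hB.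
rewrite eq_sym in hne.
have [hk1 hk2] := bc hne.
case: (cross_nat2 hn he1 he2 vA vB hA hB hk1 hk2) => h.
  by apply: cA.
by apply: cB; rewrite /CSc e1 -e2.
Qed.

Lemma ph_path (R : realFieldType) n (eps : R) (p : seq (conf n)) (x : conf n) :
  (2 <= n)%N -> -1 <= eps -> eps <= 1 -> path (@nbr n) x p ->
  (forall z, z \in x :: p -> Ham eps 0 z <= Phi n eps) ->
  (forall z, z \in x :: p -> ~ CSc eps z) -> ph (last x p) = ph x.
Proof.
move=> hn he1 he2; elim: p x => [|y p IH] x //= /andP[hxy hp] hl hc.
have hy : y \in x :: y :: p by rewrite !inE eqxx orbT.
rewrite IH //.
- symmetry; apply: (ph_step hn he1 he2 hxy); [apply: hl; exact: mem_head| exact: hl|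
    apply: hc; exact: mem_head | exact: hc].
- by move=> z hz; apply: hl; rewrite inE hz orbT.
- by move=> z hz; apply: hc; rewrite inE hz orbT.
Qed.

Lemma corner_val (n p q : nat) : (2 <= n)%N -> (p = 0 \/ p = n)%N -> (q = 0 \/ q = n)%N ->
  (n < p + p)%N = (n < q + q)%N -> p = q.
Proof.
move=> hn hp hq h.
have hnn : (n < n + n)%N by lia.
move: h; case: hp hq => -> [] -> //; rewrite hnn //=.
Qed.

Lemma corner_eq (R : realFieldType) n (eps : R) (s t : conf n) :
  (2 <= n)%N -> -1 <= eps -> eps <= 1 -> stable eps 0 s -> stable eps 0 t ->
  ph s = ph t -> s = t.
Proof.
move=> hn he1 he2 hs ht [h1 h2].
have [c1 c2] := stable_corner hn he1 he2 hs.
have [d1 d2] := stable_corner hn he1 he2 ht.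
have e1 := corner_val hn c1 d1 h1.
have e2 := corner_val hn c2 d2 h2.
have b1 : exists b, blk1 s b /\ blk1 t b.
  case: c1 => h.
    by exists false; split; [exact: (P1_blk s).1 | apply: (P1_blk t).1; rewrite -e1].
  by exists true; split; [exact: (P1_blk s).2 | apply: (P1_blk t).2; rewrite -e1].
have b2 : exists b, blk2 s b /\ blk2 t b.
  case: c2 => h.
    by exists false; split; [exact: (P2_blk s).1 | apply: (P2_blk t).1; rewrite -e2].
  by exists true; split; [exact: (P2_blk s).2 | apply: (P2_blk t).2; rewrite -e2].
case: b1 => b [bs bt]; case: b2 => b' [bs' bt'].
apply/ffunP => v; case: (vsplit v) => [[i ->]|[i ->]].
  by rewrite bs bt.
by rewrite bs' bt'.
Qed.

Lemma CS_edge (R : realFieldType) n (eps : R) (z : conf n) : CSc eps z -> onEdge z.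
Proof.
have H : P1 z = 0%N \/ P1 z = n \/ P2 z = 0%N \/ P2 z = n -> onEdge z.
  case=> [h|[h|[h|h]]].
  - by exists false; left; exact: (P1_blk z).1.
  - by exists true; left; exact: (P1_blk z).2.
  - by exists false; right; exact: (P2_blk z).1.
  - by exists true; right; exact: (P2_blk z).2.
rewrite /CSc /CS /inT => hz; apply: H.
move: hz; case: ifP => _; [|case: ifP => _];
  case=> [[_[->_]]|[[->_]|[[->_]|[_[->_]]]]]; tauto.
Qed.

Close Scope ring_scope.

Theorem theorem2p3 (R : realFieldType) (n : nat) (eps : R) :
  (2 <= n)%N -> (-1 <= eps)%R -> (eps <= 1)%R ->
  forall s1 s2 : conf n,
    stable eps 0%R s1 -> stable eps 0%R s2 -> s1 <> s2 ->
    is_gate eps 0%R s1 s2 (Cstar eps).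
Proof.
move=> hn he1 he2 s1 s2 hs1 hs2 hne.
have corner : forall s : conf n, stable eps 0%R s -> onEdge s.
  move=> s hs; have [[h|h] _] := stable_corner hn he1 he2 hs.
    by exists false; left; exact: (P1_blk s).1.
  by exists true; left; exact: (P1_blk s).2.
have CSe : forall z : conf n, Cstar eps z -> onEdge z /\ Ham eps 0%R z = Phi n eps.
  move=> z hz; have hz' : CSc eps z := hz.
  split; first exact: CS_edge hz'.
  by rewrite HamE; apply: CS_val.
have hit : forall p : seq (conf n), is_path s1 s2 p ->
    (forall z, z \in s1 :: p -> (Ham eps 0%R z <= Phi n eps)%R) ->
    exists2 z, z \in s1 :: p & Cstar eps z.
  move=> p [hp hl] hlow.
  case: (classic (exists2 z, z \in s1 :: p & Cstar eps z)) => // hno.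
  exfalso; apply: hne.
  have hc : forall z, z \in s1 :: p -> ~ CSc eps z.
    by move=> z hz hcz; apply: hno; exists z.
  have := ph_path hn he1 he2 hp hlow hc; rewrite hl => hph.
  by apply: (corner_eq hn he1 he2 hs1 hs2); rewrite hph.
have lower : forall q : seq (conf n), is_path s1 s2 q -> (Phi n eps <= path_max eps 0%R s1 q)%R.
  move=> q hq; case: (lerP (Phi n eps) (path_max eps 0%R s1 q)) => // hlt; exfalso.
  have hlow : forall z, z \in s1 :: q -> (Ham eps 0%R z <= Phi n eps)%R.
    by apply/pm_le; exact: ltW.
  have [z hz hcz] := hit q hq hlow.
  have := pm_mem eps 0%R hz; have [_ ->] := CSe z hcz => h.
  by move: (le_lt_trans h hlt); rewrite ltxx.
have [r [hr [hrl hrm]]] := edge_conn hn he1 he2 (corner s1 hs1) (corner s2 hs2).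
split.
  move=> z hz; have [ez Hz] := CSe z hz.
  have [p1 [hp1 [hl1 hm1]]] := edge_conn hn he1 he2 (corner s1 hs1) ez.
  have [p2 [hp2 [hl2 hm2]]] := edge_conn hn he1 he2 ez (corner s2 hs2).
  have hm : forall w, w \in s1 :: (p1 ++ p2) -> (Ham eps 0%R w <= Phi n eps)%R.
    move=> w; rewrite -cat_cons mem_cat => /orP[hw|hw]; first exact: hm1.
    by apply: hm2; rewrite inE hw orbT.
  have hpm : (path_max eps 0%R s1 (p1 ++ p2) <= Phi n eps)%R by apply/pm_le.
  have hzin : z \in s1 :: (p1 ++ p2) by rewrite -cat_cons mem_cat -hl1 mem_last.
  exists (p1 ++ p2); split; [split|split].
  - split; first by rewrite cat_path hp1 hl1 hp2.
    by rewrite last_cat hl1 hl2.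
  - by move=> q hq; apply: le_trans hpm (lower q hq).
  - exact: hzin.
  - apply/eqP; rewrite eq_le; apply/andP; split; first exact: pm_mem hzin.
    by rewrite Hz.
move=> p [hp hopt].
apply: hit => //; apply/pm_le.
apply: le_trans (hopt r (conj hr hrl)) _.
by apply/pm_le.
Qed.
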